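(* Let $K\ge 1$ and let $H\in\mathbb{C}^{K\times K}$ be of the form $H = D + uv^T$, where $D\in\mathbb{C}^{K\times K}$ is an invertible diagonal matrix and $u,v\in\mathbb{C}^{K\times 1}$ are column vectors all of whose components are nonzero. Suppose $$\alpha := 3 + 3\,v^TD^{-1}u + (v^TD^{-1}u)^2 \neq 1.$$ Then there exist diagonal matrices $D_1,D_2,D_3\in\mathbb{C}^{K\times K}$ such that the matrix $HD_2 + HD_3 H^T D_1 H$ is diagonal and every one of its diagonal entries is nonzero.
   Context: This is the condition for a three-phase interactive scheme on a $K$-user interference channel with forward channel matrix $H$ and reciprocal feedback channel $G=H^T$: in phase 1 sources send $x$ and destinations receive $Hx$; in phase 2 destinations send $D_1 y$ back and sources receive $H^T D_1 y$; in phase 3 sources send $D_2 x + D_3 f$, so destinations receive $(HD_2+HD_3H^TD_1H)x$ (noise ignored). The coding matrices $D_1,D_2,D_3$ must be diagonal since each node only codes over its own signals. The conclusion means each destination $t_i$ receives its desired symbol $x_i$ free of interference after two forward and one reverse transmissions. *)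

(* Defs.v *)
From mathcomp Require Import all_boot all_order all_algebra.
From mathcomp Require Export complex.
Set Implicit Arguments. Unset Strict Implicit. Unset Printing Implicit Defensive.

(* Main.v *)
Require Import Defs.
From mathcomp Require Import all_boot all_order all_algebra.
From mathcomp Require Import reals complex.
From mathcomp Require Import ring.
Import GRing.Theory Num.Theory.
Set Implicit Arguments.
Local Open Scope ring_scope.
Local Open Scope complex_scope.

Section S.
Variable (F : fieldType) (K : nat).

Lemma diag_mul1 (d e : 'rV[F]_K) : (forall i, d 0 i * e 0 i = 1) ->
  diag_mx d *m diag_mx e = 1%:M.
Proof.
move=> h; rewrite mulmx_diag -diag_const_mx; congr diag_mx.
by apply/rowP=> i; rewrite !mxE h.
Qed.

Lemma diag_mulcol (d : 'rV[F]_K) (u v : 'cV[F]_K) : (forall i, d 0 i * u i 0 = v i 0) ->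
  diag_mx d *m u = v.
Proof.
by move=> h; rewrite mul_diag_mx; apply/matrixP=> i j; rewrite !mxE ord1 h.
Qed.

Lemma main (d : 'rV[F]_K) (u v : 'cV[F]_K) (s : F) :
  (forall i, d 0 i != 0) -> (forall i, u i 0 != 0) -> (forall i, v i 0 != 0) ->
  v^T *m diag_mx (\row_i (d 0 i)^-1) *m u = s%:M -> (1 + s) * (2 + s) != 0 ->
  let H := diag_mx d + u *m v^T in
  exists D1 D2 D3 : 'M[F]_K,
    [/\ is_diag_mx D1, is_diag_mx D2, is_diag_mx D3 &
        H *m D2 + H *m D3 *m H^T *m D1 *m H = diag_mx d].
Proof.
move=> hd hu hv es hc H.
set c := (1 + s) * (2 + s) in hc.
set E := diag_mx (\row_i (d 0 i)^-1) in es.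
set Dm := diag_mx d in H *.
set W := diag_mx (\row_i (v i 0 / u i 0)).
set W' := diag_mx (\row_i (u i 0 / v i 0)).
have DE : Dm *m E = 1%:M by apply: diag_mul1 => i; rewrite mxE mulfV.
have ED : E *m Dm = 1%:M by apply: diag_mul1 => i; rewrite mxE mulVf.
have WW' : W' *m W = 1%:M.
  apply: diag_mul1 => i; rewrite !mxE mulrA divfK // mulfV //.
have Wu : W *m u = v by apply: diag_mulcol => i; rewrite mxE divfK.
have W'v : W' *m v = u by apply: diag_mulcol => i; rewrite mxE divfK.
have EW : E *m W = W *m E by apply: diag_mxC.
have WT : W^T = W by apply: tr_diag_mx.
have ET : E^T = E by apply: tr_diag_mx.
have uTEv : u^T *m E *m v = s%:M.
  by rewrite -tr_scalar_mx -es !trmx_mul trmxK ET mulmxA.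
have uTW : u^T *m W = v^T by rewrite -WT -trmx_mul Wu.
have HT : H^T = Dm + v *m u^T by rewrite /H linearD /= trmx_mul trmxK tr_diag_mx.
have s1 : 1 + s != 0 by apply: contraNneq hc; rewrite /c => ->; rewrite mul0r.
have s2 : 2 + s != 0 by apply: contraNneq hc; rewrite /c => ->; rewrite mulr0.
have P : H^T *m (E *m W) *m H = W *m Dm + (2 + s) *: (v *m v^T).
  have t3e : u^T *m E *m W *m Dm = v^T.
    by rewrite -(mulmxA _ E W) EW mulmxA -(mulmxA _ E Dm) ED mulmx1 uTW.
  have t3 : v *m u^T *m E *m W *m Dm = v *m v^T by rewrite -t3e !mulmxA.
  have t4 : v *m u^T *m E *m W *m u *m v^T = s *: (v *m v^T).
    rewrite -(mulmxA _ W u) Wu.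
    have -> : v *m u^T *m E *m v = v *m s%:M by rewrite -uTEv !mulmxA.
    by rewrite mul_mx_scalar -scalemxAl.
  rewrite HT /H mulmxDr !mulmxDl !mulmxA DE !mul1mx Wu t3 t4.
  by rewrite scalerDl scaler_nat mulr2n !addrA.
exists (E *m W), (1 + c^-1)%:M, ((- c^-1) *: (E *m W')).
split.
- by rewrite /E /W mulmx_diag diag_mx_is_diag.
- exact: scalar_mx_is_diag.
- by rewrite /E /W' mulmx_diag; apply/is_diag_mxP=> i j nij; rewrite mxE (is_diag_mxP (diag_mx_is_diag _)) ?mulr0.
have -> : H *m ((- c^-1) *: (E *m W')) *m H^T *m (E *m W) *m H
   = H *m ((- c^-1) *: (E *m W') *m (H^T *m (E *m W) *m H)) by rewrite !mulmxA.
rewrite P.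
have Q : (- c^-1) *: (E *m W') *m (W *m Dm + (2 + s) *: (v *m v^T))
   = (- c^-1)%:M - (1 + s)^-1 *: (E *m u *m v^T).
  rewrite mulmxDr -!scalemxAl -!scalemxAr scalerA !mulmxA -(mulmxA E W' W) WW' mulmx1 ED.
  rewrite -(mulmxA E W' v) W'v.
  have -> : - c^-1 * (2 + s) = - (1 + s)^-1 by rewrite /c invfM mulNr -mulrA mulVf // mulr1.
  by rewrite scalemx1 scaleNr.
rewrite Q -mulmxDr addrA -raddfD /= addrK.
have R : H *m (E *m u *m v^T) = (1 + s) *: (u *m v^T).
  rewrite /H mulmxDl !mulmxA DE mul1mx.
  have -> : u *m v^T *m E *m u = u *m s%:M by rewrite -es !mulmxA.
  by rewrite mul_mx_scalar -scalemxAl scalerDl scale1r.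
by rewrite mulmxBr mulmx1 -scalemxAr R scalerA mulVf // scale1r /H addrK.
Qed.

Lemma diag_eq (D : 'M[F]_K) : is_diag_mx D -> D = diag_mx (\row_i D i i).
Proof.
move/is_diag_mxP=> hD; apply/matrixP=> i j; rewrite !mxE.
case: (eqVneq i j) => [->|nij]; first by rewrite mulr1n.
by rewrite mulr0n hD // ; apply: contra_neq nij => /val_inj.
Qed.
End S.

Theorem theorem1 (R : realType) (K : nat) (hK : (1 <= K)%N)
  (D : 'M[R[i]]_K) (u v : 'cV[R[i]]_K)
  (hDdiag : is_diag_mx D) (hDinv : D \in unitmx)
  (hu : forall i, u i 0 != 0) (hv : forall i, v i 0 != 0) :
  let H := D + u *m v^T in
  let s := (v^T *m invmx D *m u) 0 0 in
  3 + 3 * s + s ^+ 2 != 1 ->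
  exists D1 D2 D3 : 'M[R[i]]_K,
    [/\ is_diag_mx D1, is_diag_mx D2, is_diag_mx D3,
        is_diag_mx (H *m D2 + H *m D3 *m H^T *m D1 *m H)
      & forall i, (H *m D2 + H *m D3 *m H^T *m D1 *m H) i i != 0].
Proof.
move=> H s ha.
have eD := @diag_eq _ _ D hDdiag.
set d := \row_i D i i in eD.
have hd : forall i, d 0 i != 0.
  move=> i; have := mulmxV hDinv; move/matrixP/(_ i i).
  rewrite {1}eD mul_diag_mx !mxE eqxx mulr1n => h.
  by apply/eqP => h0; move: h; rewrite h0 mul0r => /eqP; rewrite eq_sym oner_eq0.
have Einv : invmx D = diag_mx (\row_i (d 0 i)^-1).
  have h : diag_mx d *m diag_mx (\row_i (d 0 i)^-1) = 1%:M.
    by apply: diag_mul1 => i; have := hd i; rewrite !mxE => hi; rewrite mulfV.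
  rewrite -[invmx D]mulmx1 -h mulmxA -eD mulVmx ?mul1mx //.
have es : v^T *m diag_mx (\row_i (d 0 i)^-1) *m u = s%:M.
  by rewrite -Einv; exact: mx11_scalar.
have hc : (1 + s) * (2 + s) != 0.
  apply: contra ha => /eqP h; apply/eqP.
  have -> : 3 + 3 * s + s ^+ 2 = 1 + (1 + s) * (2 + s) by ring.
  by rewrite h addr0.
have [D1 [D2 [D3 [h1 h2 h3 he]]]] := @main _ _ _ _ _ _ hd hu hv es hc.
exists D1, D2, D3; rewrite /H eD he; split => //.
by move=> i; rewrite mxE eqxx mulr1n.
Qed.
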